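(* Let $d\ge 2$, $2\le k\le d+1$, and let $y_1,\dots,y_N\in\{1,\dots,k\}$ be labels of a class-balanced dataset (each class has exactly $N/k\ge1$ samples). Let $s>0$, $\alpha_1\ge\frac12$, $\alpha_2\le\alpha_1$, $\beta_1,\beta_2\in\mathbb R$. For $\boldsymbol w_1,\dots,\boldsymbol w_k,\boldsymbol z_1,\dots,\boldsymbol z_N\in\mathbb S^{d-1}$ define the GM-Softmax empirical risk $$L=\frac1N\sum_{i=1}^N-\log\frac{\exp(s(\alpha_1\boldsymbol w_{y_i}^{\mathrm T}\boldsymbol z_i+\beta_1))}{\exp(s(\alpha_2\boldsymbol w_{y_i}^{\mathrm T}\boldsymbol z_i+\beta_2))+\sum_{j\ne y_i}\exp(s\boldsymbol w_j^{\mathrm T}\boldsymbol z_i)}.$$ Then for all such configurations $$L\ge \log\Big[\exp\big(s(\alpha_2-\alpha_1+\beta_2-\beta_1)\big)+(k-1)\exp\big(-s(\tfrac1{k-1}+\alpha_1+\beta_1)\big)\Big],$$ with equality if and only if $\boldsymbol w_i^{\mathrm T}\boldsymbol w_j=-\frac1{k-1}$ for all $i\ne j$ and $\boldsymbol z_i=\boldsymbol w_{y_i}$ for all $i$. Consequently every minimizer of $L$ has the largest possible class margin $m_c=\arccos\frac{-1}{k-1}$ and the largest possible minimal sample margin $\gamma_{\min}=\frac{k}{k-1}$.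
   Context: $\mathbb S^{d-1}$ is the unit sphere in $\mathbb R^d$. Class margin: $m_c(\{\boldsymbol w_i\})=\arccos\big[\max_{i\ne j}\boldsymbol w_i^{\mathrm T}\boldsymbol w_j\big]$ for unit prototypes. Minimal sample margin: $\gamma_{\min}=\min_i\big(\boldsymbol w_{y_i}^{\mathrm T}\boldsymbol z_i-\max_{j\ne y_i}\boldsymbol w_j^{\mathrm T}\boldsymbol z_i\big)$. *)

(* Defs.v *)
From HB Require Import structures.
From mathcomp Require Import all_boot all_order all_algebra.
From mathcomp Require Import all_classical all_reals all_analysis.
Set Implicit Arguments. Unset Strict Implicit. Unset Printing Implicit Defensive.
Import Order.TTheory GRing.Theory Num.Theory.
Local Open Scope ring_scope.

Definition dot {R : realType} {d : nat} (u v : 'rV[R]_d) : R :=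
  \sum_(i < d) u 0 i * v 0 i.

Definition on_sphere {R : realType} {d : nat} (u : 'rV[R]_d) : Prop :=
  dot u u = 1.

Definition balanced {N k : nat} (y : 'I_N -> 'I_k) : Prop :=
  (0 < N)%N /\ forall c : 'I_k, (#|[set i | y i == c]| * k)%N = N.

Definition gm_loss {R : realType} {d k N : nat} (y : 'I_N -> 'I_k)
  (s a1 a2 b1 b2 : R) (w : 'I_k -> 'rV[R]_d) (z : 'I_N -> 'rV[R]_d) : R :=
  N%:R^-1 * \sum_(i < N)
    - ln (expR (s * (a1 * dot (w (y i)) (z i) + b1)) /
          (expR (s * (a2 * dot (w (y i)) (z i) + b2)) +
           \sum_(j < k | j != y i) expR (s * dot (w j) (z i)))).

Definition gm_bound {R : realType} (k : nat) (s a1 a2 b1 b2 : R) : R :=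
  ln (expR (s * (a2 - a1 + b2 - b1)) +
      (k%:R - 1) * expR (- (s * ((k%:R - 1)^-1 + a1 + b1)))).

(* class margin m_c = arccos (max_{i<>j} w_i^T w_j).  The default element -1
   of the max is harmless: unit vectors have inner product >= -1 and for
   k >= 2 the index set is nonempty. *)
Definition class_margin {R : realType} {d k : nat} (w : 'I_k -> 'rV[R]_d) : R :=
  acos (\big[Num.max/(-1)]_(p : 'I_k * 'I_k | p.1 != p.2) dot (w p.1) (w p.2)).

(* minimal sample margin gamma_min = min_i (w_{y_i}^T z_i - max_{j<>y_i} w_j^T z_i).
   Defaults -1 (inner max) and 2 (outer min) are harmless on the sphere
   with k >= 2 and N >= 1. *)
Definition min_sample_margin {R : realType} {d k N : nat} (y : 'I_N -> 'I_k)
  (w : 'I_k -> 'rV[R]_d) (z : 'I_N -> 'rV[R]_d) : R :=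
  \big[Num.min/2]_(i < N)
    (dot (w (y i)) (z i) - \big[Num.max/(-1)]_(j < k | j != y i) dot (w j) (z i)).

(* Main.v *)
Require Import Defs.
From HB Require Import structures.
From mathcomp Require Import all_boot all_order all_algebra.
From mathcomp Require Import all_classical all_reals all_analysis.
From mathcomp Require Import ring lra zify.
Import Order.TTheory GRing.Theory Num.Theory.
Set Implicit Arguments. Unset Strict Implicit.
Local Open Scope ring_scope.

Lemma dotC (R : realType) (d : nat) (u v : 'rV[R]_d) : dot u v = dot v u.
Proof. by rewrite /dot; apply: eq_bigr => i _; rewrite mulrC. Qed.

Lemma dotDl (R : realType) (d : nat) (u v x : 'rV[R]_d) :
  dot (u + v) x = dot u x + dot v x.
Proof. by rewrite /dot -big_split; apply: eq_bigr => i _; rewrite mxE mulrDl. Qed.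

Lemma dotDr (R : realType) (d : nat) (u v x : 'rV[R]_d) :
  dot x (u + v) = dot x u + dot x v.
Proof. by rewrite dotC dotDl !(dotC x). Qed.

Lemma dotZl (R : realType) (d : nat) (a : R) (u x : 'rV[R]_d) :
  dot (a *: u) x = a * dot u x.
Proof. by rewrite /dot mulr_sumr; apply: eq_bigr => i _; rewrite mxE mulrA. Qed.

Lemma dotZr (R : realType) (d : nat) (a : R) (u x : 'rV[R]_d) :
  dot x (a *: u) = a * dot x u.
Proof. by rewrite dotC dotZl dotC. Qed.

Lemma dotNl (R : realType) (d : nat) (u x : 'rV[R]_d) :
  dot (- u) x = - dot u x.
Proof. by rewrite -scaleN1r dotZl mulN1r. Qed.

Lemma dotNr (R : realType) (d : nat) (u x : 'rV[R]_d) :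
  dot x (- u) = - dot x u.
Proof. by rewrite dotC dotNl dotC. Qed.

Lemma dotBl (R : realType) (d : nat) (u v x : 'rV[R]_d) :
  dot (u - v) x = dot u x - dot v x.
Proof. by rewrite dotDl dotNl. Qed.

Lemma dotBr (R : realType) (d : nat) (u v x : 'rV[R]_d) :
  dot x (u - v) = dot x u - dot x v.
Proof. by rewrite dotDr dotNr. Qed.

Lemma dot_suml (R : realType) (d k : nat) (P : pred 'I_k) (w : 'I_k -> 'rV[R]_d) x :
  dot (\sum_(j | P j) w j) x = \sum_(j | P j) dot (w j) x.
Proof.
rewrite /dot exchange_big /=; apply: eq_bigr => i _.
by rewrite summxE mulr_suml.
Qed.

Lemma dot_ge0 (R : realType) (d : nat) (u : 'rV[R]_d) : 0 <= dot u u.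
Proof. by rewrite /dot; apply: sumr_ge0 => i _; exact: sqr_ge0. Qed.

Lemma dot0P (R : realType) (d : nat) (u : 'rV[R]_d) : dot u u = 0 -> u = 0.
Proof.
move=> H; apply/matrixP => i j; rewrite mxE (ord1 i).
have := @psumr_eq0P R _ xpredT (fun j => u 0 j * u 0 j) (fun j _ => sqr_ge0 (u 0 j)) H j isT.
by move/eqP; rewrite mulf_eq0 orbb => /eqP.
Qed.

Lemma expR_tangent (R : realType) (x m : R) : expR m * (1 + (x - m)) <= expR x.
Proof.
have := expR_ge1Dx (x - m); rewrite -(ler_pM2l (expR_gt0 m)) -expRD.
by rewrite (addrC m) subrK.
Qed.

Lemma expR_eq1Dx (R : realType) (x : R) : expR x = 1 + x -> x = 0.
Proof.
move=> H; apply/eqP; apply/negPn/negP => hx.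
have [hlt|hge] := ltP (1 + x / 2) 0.
  have : 0 < expR x := expR_gt0 x. rewrite H. lra.
have h2 := expR_ge1Dx (x / 2).
have : (1 + x / 2) ^+ 2 <= expR x.
  rewrite [in expR x](splitr x) expRD -expr2.
  by rewrite lerXn2r // ?nnegrE // ltW ?expR_gt0.
have hx2 : 0 < x ^+ 2 by rewrite exprn_even_gt0.
rewrite H. nra.
Qed.


Lemma expR_tangent_eq (R : realType) (x m : R) :
  expR x = expR m * (1 + (x - m)) -> x = m.
Proof.
move=> H; have : expR (x - m) = 1 + (x - m).
  apply: (mulfI (lt0r_neq0 (expR_gt0 m))); by rewrite -expRD (addrC m) subrK.
by move/expR_eq1Dx/eqP; rewrite subr_eq0 => /eqP.
Qed.

Lemma wamgm (R : realType) (k : nat) (c : 'I_k) (p0 p1 x0 : R) (x : 'I_k -> R) :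
  0 < p0 -> 0 < p1 -> p0 + p1 * (\sum_(j | j != c) 1) = 1 ->
  exists r, 0 <= r /\
   p0 * expR x0 + p1 * \sum_(j | j != c) expR (x j) =
     expR (p0 * x0 + p1 * \sum_(j | j != c) x j) + r /\
   (r = 0 -> x0 = p0 * x0 + p1 * \sum_(j | j != c) x j /\
     forall j, j != c -> x j = p0 * x0 + p1 * \sum_(j | j != c) x j).
Proof.
move=> p0g p1g hp.
set m := p0 * x0 + p1 * \sum_(j | j != c) x j.
set t := fun y => expR y - expR m * (1 + (y - m)).
have t0 : forall y, 0 <= t y by move=> y; rewrite /t subr_ge0 expR_tangent.
exists (p0 * t x0 + p1 * \sum_(j | j != c) t (x j)); split.
  by apply: addr_ge0; apply: mulr_ge0; rewrite ?t0 ?(ltW p0g) ?(ltW p1g) //; exact: sumr_ge0.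
split.
  have E : \sum_(j | j != c) expR (x j) =
     \sum_(j | j != c) (expR m * (1 + (x j - m))) + \sum_(j | j != c) t (x j).
    by rewrite -big_split; apply: eq_bigr => j _; rewrite /t /= addrC subrK.
  have E2 : \sum_(j | j != c) (expR m * (1 + (x j - m))) =
     expR m * (\sum_(j | j != c) 1 + \sum_(j | j != c) x j - m * \sum_(j | j != c) 1).
    rewrite -mulr_sumr; congr (_ * _).
    rewrite (eq_bigr (fun j => 1 + x j - m)); last by move=> j _; rewrite addrA.
    rewrite sumrB big_split /= mulr_sumr; congr (_ - _); by apply: eq_bigr => j _; rewrite mulr1.
  rewrite E E2 /t /=; clear E E2 t0; rewrite /t /m; clear t m.
  move: hp; move: (\sum_(j | j != c) (1 : R)) (\sum_(j | j != c) x j) => n X hp.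
  have hp' : p0 = 1 - p1 * n by rewrite -hp; ring.
  rewrite hp'; ring.
move=> r0.
have hpt0 : 0 <= p0 * t x0 by apply: mulr_ge0; rewrite ?t0 ?(ltW p0g).
have hpt1 : 0 <= p1 * \sum_(j | j != c) t (x j).
  by apply: mulr_ge0; rewrite ?(ltW p1g) //; exact: sumr_ge0.
have a0 : p0 * t x0 = 0 by lra.
have a1 : p1 * \sum_(j | j != c) t (x j) = 0 by lra.
have tx0 : t x0 = 0 by move: a0 => /eqP; rewrite mulf_eq0 (gt_eqF p0g) /= => /eqP.
have tx : \sum_(j | j != c) t (x j) = 0.
  by move: a1 => /eqP; rewrite mulf_eq0 (gt_eqF p1g) /= => /eqP.
split.
  by apply: expR_tangent_eq; move/eqP: tx0; rewrite /t subr_eq0 => /eqP.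
move=> j hj; apply: expR_tangent_eq.
have := psumr_eq0P (fun j _ => t0 (x j)) tx hj.
by move/eqP; rewrite /t subr_eq0 => /eqP.
Qed.

Lemma balanced_sum (R : realType) (N k : nat) (y : 'I_N -> 'I_k) (F : 'I_k -> R) :
  balanced y -> k%:R * \sum_(i < N) F (y i) = N%:R * \sum_(c < k) F c.
Proof.
move=> [_ hb].
rewrite (partition_big y xpredT) //= mulr_sumr mulr_sumr; apply: eq_bigr => c _.
have -> : \sum_(i | y i == c) F (y i) = \sum_(i in [set i | y i == c]) F c.
  by apply: eq_big => [i|i /eqP ->]; rewrite ?inE.
have hn : (#|[set i | y i == c]|%:R * k%:R : R) = N%:R by rewrite -natrM hb.
rewrite sumr_const -hn -mulr_natl; ring.
Qed.

Lemma sum_neq1 (R : realType) (k : nat) (c : 'I_k) :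
  \sum_(j | j != c) (1 : R) = k%:R - 1.
Proof.
rewrite sumr_const.
have -> : #|[pred j | j != c]| = #|predC1 c| by apply: eq_card => j; rewrite !inE.
rewrite cardC1 card_ord.
by case: k c => [[]//|k' _]; rewrite /= -natr1 addrK.
Qed.

Lemma sample_bound (R : realType) (k : nat) (v : 'I_k -> R)
  (cc : R) (c : 'I_k) (s a1 a2 b1 b2 : R) :
  0 < s -> (2 <= k)%N -> forall kap P Q S : R,
  kap = k%:R - 1 -> P = expR (s * (a2 + b2)) -> Q = expR (- (s * kap^-1)) ->
  S = P + kap * Q ->
  exists r, 0 <= r /\
  - ln (expR (s * (a1 * cc + b1)) /
       (expR (s * (a2 * cc + b2)) + \sum_(j | j != c) expR (s * v j)))
   = ln S - s * (a1 + b1) +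
     (s * (P / S) * (a1 - a2) * (1 - cc) +
      s * (Q / S) * (\sum_(j | j != c) v j + 1 + kap * a1 * (1 - cc))) + r
  /\ (r = 0 -> forall j, j != c -> s * v j + s * kap^-1 = s * a2 * (cc - 1)).
Proof.
move=> s0 k2 kap P Q S hkap hP hQ hS.
have kap1 : 1 <= kap.
  rewrite hkap lerBrDr -(natrD R 1 1) ler_nat; exact: k2.
have hk : \sum_(j | j != c) (1 : R) = kap by rewrite sum_neq1.
have kap0 : kap != 0 by apply: lt0r_neq0; lra.
have P0 : 0 < P by rewrite hP expR_gt0.
have Q0 : 0 < Q by rewrite hQ expR_gt0.
have S0 : 0 < S by rewrite hS; apply: addr_gt0 => //; apply: mulr_gt0 => //; lra.
have p0g : 0 < P / S by apply: divr_gt0.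
have p1g : 0 < Q / S by apply: divr_gt0.
have hp0 : P / S + Q / S * kap = 1.
  rewrite hS. field. rewrite -hS. exact: lt0r_neq0.
have hp := hp0; rewrite -hk in hp.
pose x0 := s * a2 * (cc - 1).
pose x := fun j => s * v j + s * kap^-1.
have [r' [r'0 [Er' Hr']]] := wamgm x0 x p0g p1g hp.
have Hsx : \sum_(j | j != c) x j = s * \sum_(j | j != c) v j + s.
  have h1 : \sum_(j | j != c) (s * kap^-1) = s * kap^-1 * \sum_(j | j != c) (1 : R).
    by rewrite mulr_sumr; apply: eq_bigr => j _; rewrite mulr1.
  rewrite /x big_split /= -mulr_sumr h1 hk -mulrA mulVf //; ring.
rewrite Hsx in Er' Hr'.
move: Er' Hr'.
have -> : P / S * x0 + Q / S * (s * \sum_(j | j != c) v j + s) =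
    P / S * (s * a2 * (cc - 1)) + Q / S * (s * \sum_(j | j != c) v j + s) by [].
set m := (P / S * (s * a2 * (cc - 1)) + Q / S * (s * \sum_(j | j != c) v j + s)).
have hm : m = P / S * (s * a2 * (cc - 1)) + Q / S * (s * \sum_(j | j != c) v j + s) by [].
clearbody m. move=> Er' Hr'.
have Eden : expR (s * (a2 * cc + b2)) + \sum_(j | j != c) expR (s * v j)
    = S * (expR m + r').
  rewrite -Er'.
  have -> : forall e0 e1, S * (P / S * e0 + Q / S * e1) = P * e0 + Q * e1.
    by move=> e0 e1; field; exact: lt0r_neq0.
  rewrite mulr_sumr hP hQ -expRD; congr (expR _ + _).
    rewrite /x0; ring.
  apply: eq_bigr => j _; rewrite -expRD /x; congr expR; ring.
have em0 : 0 < expR m + r' by apply: ltr_wpDr => //; apply: expR_gt0.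
exists (ln (expR m + r') - m); split.
  rewrite subr_ge0 -[X in X <= _]expRK ler_ln ?posrE ?expR_gt0 //.
  by rewrite lerDl.
split.
  rewrite Eden lnM ?posrE ?expR_gt0 ?invr_gt0 ?mulr_gt0 // lnV ?posrE ?mulr_gt0 //.
  rewrite lnM ?posrE //.
  rewrite expRK.
  have hp' : P / S = 1 - Q / S * kap by rewrite -hp0; ring.
  rewrite hm hp'. ring.
move=> r0 j hj.
have r'z : r' = 0.
  have : ln (expR m + r') = ln (expR m) by rewrite expRK; lra.
  move/ln_inj; rewrite !posrE => /(_ em0 (expR_gt0 _)) H; lra.
have [h0 h1] := Hr' r'z.
by have := h1 j hj; rewrite -h0 /x /x0.
Qed.

Lemma geom (R : realType) (d k N : nat) (y : 'I_N -> 'I_k)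
  (w : 'I_k -> 'rV[R]_d) (z : 'I_N -> 'rV[R]_d) (a1 : R) :
  balanced y -> (2 <= k)%N -> 2^-1 <= a1 ->
  (forall j, on_sphere (w j)) -> (forall i, on_sphere (z i)) ->
  0 <= \sum_(i < N) (\sum_(j | j != y i) dot (w j) (z i) + 1 +
          (k%:R - 1) * a1 * (1 - dot (w (y i)) (z i))) /\
  (\sum_(i < N) (\sum_(j | j != y i) dot (w j) (z i) + 1 +
          (k%:R - 1) * a1 * (1 - dot (w (y i)) (z i))) = 0 ->
   forall i, z i = w (y i)).
Proof.
move=> hb k2 ha1 hw hz.
have hN : (0 < N)%N by case: hb.
have kap1 : 1 <= (k%:R : R) - 1.
  rewrite lerBrDr -(natrD R 1 1) ler_nat; exact: k2.
set kap := (k%:R : R) - 1 in kap1 *.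
have hkap : (k%:R : R) = kap + 1 by rewrite /kap; ring.
clearbody kap.
pose W := \sum_(j < k) w j.
have hW : W = \sum_(j < k) w j by [].
clearbody W.
pose lam := 1 + kap * a1.
have hlam : lam = 1 + kap * a1 by [].
clearbody lam.
have lam0 : 0 < lam by rewrite hlam; nra.
have Eg : forall i, \sum_(j | j != y i) dot (w j) (z i) + 1 + kap * a1 * (1 - dot (w (y i)) (z i))
    = dot W (z i) + lam * (1 - dot (w (y i)) (z i)).
  move=> i; rewrite hW dot_suml [in RHS](bigD1 (y i)) //= hlam; ring.
pose u := fun i => lam *: (z i - w (y i)) + W.
have Eu : forall i, 2 * lam * (dot W (z i) + lam * (1 - dot (w (y i)) (z i)))
    = dot (u i) (u i) + 2 * lam * dot W (w (y i)) - dot W W.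
  move=> i; rewrite /u.
  rewrite !(dotDl, dotDr, dotZl, dotZr, dotNl, dotNr).
  rewrite ?opprK (hz i) (hw (y i)) (dotC (z i) (w (y i))) (dotC (z i) W) (dotC (w (y i)) W).
  ring.
have Ebal : k%:R * \sum_(i < N) dot W (w (y i)) = N%:R * dot W W.
  rewrite (balanced_sum (fun c => dot W (w c)) hb); congr (_ * _).
  have -> : dot W W = dot (\sum_(j < k) w j) W by rewrite -hW.
  by rewrite dot_suml; apply: eq_bigr => c _; rewrite dotC.
have Esum : k%:R * (2 * lam) * \sum_(i < N) (\sum_(j | j != y i) dot (w j) (z i) + 1 +
          kap * a1 * (1 - dot (w (y i)) (z i)))
    = k%:R * \sum_(i < N) dot (u i) (u i) + N%:R * (2 * lam - k%:R) * dot W W.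
  rewrite (eq_bigr _ (fun i _ => Eg i)) -mulrA.
  have -> : 2 * lam * \sum_(i < N) (dot W (z i) + lam * (1 - dot (w (y i)) (z i)))
     = \sum_(i < N) dot (u i) (u i) + 2 * lam * \sum_(i < N) dot W (w (y i)) - N%:R * dot W W.
    rewrite mulr_sumr (eq_bigr _ (fun i _ => Eu i)) sumrB big_split /= -mulr_sumr.
    by rewrite sumr_const card_ord; congr (_ - _); rewrite mulr_natl.
  have -> : forall A X B, k%:R * (A + 2 * lam * X - B) = k%:R * A + 2 * lam * (k%:R * X) - k%:R * B.
    by move=> *; ring.
  rewrite Ebal; ring.
have k0 : 0 < (k%:R : R) by rewrite ltr0n; apply: leq_trans k2.
have N0 : 0 < (N%:R : R) by rewrite ltr0n.
have c0 : 0 < 2 * lam - k%:R.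
  rewrite hkap hlam; nra.
have s1 : 0 <= \sum_(i < N) dot (u i) (u i) by apply: sumr_ge0 => i _; apply: dot_ge0.
have s2 : 0 <= dot W W by apply: dot_ge0.
have t1 : 0 <= k%:R * \sum_(i < N) dot (u i) (u i) by apply: mulr_ge0 => //; apply: ltW.
have t2 : 0 <= N%:R * (2 * lam - k%:R) * dot W W.
  by apply: mulr_ge0 => //; apply: mulr_ge0; apply: ltW.
have kl : 0 < k%:R * (2 * lam) by apply: mulr_gt0 => //; apply: mulr_gt0.
split.
  rewrite -(pmulr_rge0 _ kl) Esum; exact: addr_ge0.
move=> H0 i.
move: Esum; rewrite H0 mulr0 => Esum.
have a0 : k%:R * \sum_(i < N) dot (u i) (u i) = 0 by lra.
have b0 : N%:R * (2 * lam - k%:R) * dot W W = 0 by lra.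
have WW : dot W W = 0.
  move/eqP: b0; rewrite !mulf_eq0 (gt_eqF N0) (gt_eqF c0) /= => /eqP //.
have W0 := dot0P WW.
have uu : \sum_(i < N) dot (u i) (u i) = 0.
  by move/eqP: a0; rewrite mulf_eq0 (gt_eqF k0) /= => /eqP.
have ui := dot0P (@psumr_eq0P _ _ xpredT _ (fun i _ => dot_ge0 (u i)) uu i isT).
move: ui; rewrite /u W0 addr0 => /eqP; rewrite scaler_eq0 (gt_eqF lam0) /= subr_eq0.
by move/eqP.
Qed.

Lemma dot_le1 (R : realType) (d : nat) (u v : 'rV[R]_d) :
  on_sphere u -> on_sphere v -> dot u v <= 1.
Proof.
move=> hu hv; have := dot_ge0 (u - v).
rewrite !(dotDl, dotDr, dotNl, dotNr) opprK hu hv (dotC v u); lra.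
Qed.

Lemma dot1_eq (R : realType) (d : nat) (u v : 'rV[R]_d) :
  on_sphere u -> on_sphere v -> dot u v = 1 -> u = v.
Proof.
move=> hu hv h; apply/eqP; rewrite -subr_eq0; apply/eqP; apply: dot0P.
rewrite !(dotDl, dotDr, dotNl, dotNr) opprK hu hv (dotC v u) h; ring.
Qed.

Lemma part1 (R : realType) (d k N : nat) (y : 'I_N -> 'I_k)
  (s a1 a2 b1 b2 : R) :
  (2 <= k)%N -> balanced y -> 0 < s -> 2^-1 <= a1 -> a2 <= a1 ->
  forall (w : 'I_k -> 'rV[R]_d) (z : 'I_N -> 'rV[R]_d),
     (forall j, on_sphere (w j)) -> (forall i, on_sphere (z i)) ->
     gm_bound k s a1 a2 b1 b2 <= gm_loss y s a1 a2 b1 b2 w z /\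
     (gm_loss y s a1 a2 b1 b2 w z = gm_bound k s a1 a2 b1 b2 ->
        (forall i j : 'I_k, i != j -> dot (w i) (w j) = - (k%:R - 1)^-1) /\
        (forall i : 'I_N, z i = w (y i))).
Proof.
move=> k2 hb s0 ha1 ha2 w z hw hz.
have hN : (0 < N)%N by case: hb.
have [Gg Gz] := geom hb k2 ha1 hw hz.
pose kap := (k%:R : R) - 1. have hkap : kap = k%:R - 1 by [].
have kap1 : 1 <= kap.
  rewrite hkap lerBrDr -(natrD R 1 1) ler_nat; exact: k2.
rewrite -hkap in Gg Gz *.
clearbody kap.
pose P := expR (s * (a2 + b2)). have hP : P = expR (s * (a2 + b2)) by [].
clearbody P.
pose Q := expR (- (s * kap^-1)). have hQ : Q = expR (- (s * kap^-1)) by [].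
clearbody Q.
pose S := P + kap * Q. have hS : S = P + kap * Q by [].
clearbody S.
have P0 : 0 < P by rewrite hP expR_gt0.
have Q0 : 0 < Q by rewrite hQ expR_gt0.
have S0 : 0 < S by rewrite hS; apply: addr_gt0 => //; apply: mulr_gt0 => //; lra.
have hB : gm_bound k s a1 a2 b1 b2 = ln S - s * (a1 + b1).
  rewrite /gm_bound -hkap.
  have -> : expR (s * (a2 - a1 + b2 - b1)) + kap * expR (- (s * (kap^-1 + a1 + b1)))
      = S * expR (- (s * (a1 + b1))).
    rewrite hS hP hQ mulrDl -!expRD -mulrA -expRD; congr (expR _ + _ * expR _); ring.
  by rewrite lnM ?posrE ?expR_gt0 // expRK.
rewrite hB.
have H := fun i => @sample_bound R k (fun j => dot (w j) (z i)) (dot (w (y i)) (z i)) (y i)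
   s a1 a2 b1 b2 s0 k2 kap P Q S hkap hP hQ hS.
pose loss := fun i => - ln (expR (s * (a1 * dot (w (y i)) (z i) + b1)) /
          (expR (s * (a2 * dot (w (y i)) (z i) + b2)) +
           \sum_(j < k | j != y i) expR (s * dot (w j) (z i)))).
have -> : gm_loss y s a1 a2 b1 b2 w z = N%:R^-1 * \sum_(i < N) loss i by [].
pose c := fun i => dot (w (y i)) (z i).
pose g := fun i => \sum_(j | j != y i) dot (w j) (z i) + 1 + kap * a1 * (1 - c i).
pose lb := fun i => s * (P / S) * (a1 - a2) * (1 - c i) + s * (Q / S) * g i.
have Hr : forall i, 0 <= loss i - (ln S - s * (a1 + b1)) - lb i /\
   (loss i - (ln S - s * (a1 + b1)) - lb i = 0 ->
    forall j, j != y i -> s * dot (w j) (z i) + s * kap^-1 = s * a2 * (c i - 1)).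
  move=> i; have [r [r0 [E Er]]] := H i.
  have -> : loss i - (ln S - s * (a1 + b1)) - lb i = r.
    rewrite /loss E /lb /g /c; ring.
  by [].
have Hsum : \sum_(i < N) loss i = N%:R * (ln S - s * (a1 + b1)) +
    (s * (P / S) * (a1 - a2) * \sum_(i < N) (1 - c i) + s * (Q / S) * \sum_(i < N) g i)
    + \sum_(i < N) (loss i - (ln S - s * (a1 + b1)) - lb i).
  have -> : N%:R * (ln S - s * (a1 + b1)) = \sum_(i < N) (ln S - s * (a1 + b1)).
    by rewrite sumr_const card_ord mulr_natl.
  rewrite !mulr_sumr -!big_split /=.
  by apply: eq_bigr => i _; rewrite /lb; ring.
have X1 : 0 <= s * (P / S) * (a1 - a2) * \sum_(i < N) (1 - c i).
  apply: mulr_ge0; last by apply: sumr_ge0 => i _; rewrite subr_ge0 dot_le1.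
  apply: mulr_ge0; last by lra.
  by apply: mulr_ge0; apply: ltW => //; apply: divr_gt0.
have X2 : 0 <= s * (Q / S) * \sum_(i < N) g i.
  by apply: mulr_ge0 => //; apply: mulr_ge0; apply: ltW => //; apply: divr_gt0.
have X3 : 0 <= \sum_(i < N) (loss i - (ln S - s * (a1 + b1)) - lb i).
  by apply: sumr_ge0 => i _; case: (Hr i).
have N0 : 0 < (N%:R : R) by rewrite ltr0n.
have EL : N%:R^-1 * \sum_(i < N) loss i = ln S - s * (a1 + b1) +
   N%:R^-1 * ((s * (P / S) * (a1 - a2) * \sum_(i < N) (1 - c i) + s * (Q / S) * \sum_(i < N) g i)
    + \sum_(i < N) (loss i - (ln S - s * (a1 + b1)) - lb i)).
  by rewrite Hsum; field; rewrite !lt0r_neq0.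
have NI : 0 < (N%:R : R)^-1 by rewrite invr_gt0.
split.
  rewrite EL lerDl; apply: mulr_ge0; [exact: ltW | exact: addr_ge0 (addr_ge0 X1 X2) X3].
rewrite EL => Heq.
have Z : N%:R^-1 * ((s * (P / S) * (a1 - a2) * \sum_(i < N) (1 - c i) + s * (Q / S) * \sum_(i < N) g i)
    + \sum_(i < N) (loss i - (ln S - s * (a1 + b1)) - lb i)) = 0 by lra.
move/eqP: Z; rewrite mulf_eq0 (gt_eqF NI) /= => /eqP Z.
have Z2 : s * (Q / S) * \sum_(i < N) g i = 0 by lra.
have Z3 : \sum_(i < N) (loss i - (ln S - s * (a1 + b1)) - lb i) = 0 by lra.
have Gs : \sum_(i < N) g i = 0.
  move/eqP: Z2; rewrite mulf_eq0 => /orP [|/eqP //].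
  by rewrite mulf_eq0 (gt_eqF s0) (gt_eqF (divr_gt0 Q0 S0)).
have hzw := Gz Gs.
split => //.
move=> a b hab.
have [hbN _] := hb.
have : (0 < #|[set i | y i == b]|)%N.
  have := (proj2 hb) b; case: #|_| => //= h; rewrite -h in hN; by [].
case/card_gt0P => i; rewrite inE => /eqP hyi.
have Hri := @psumr_eq0P _ _ xpredT _ (fun i _ => proj1 (Hr i)) Z3 i isT.
have := proj2 (Hr i) Hri a; rewrite hyi => /(_ hab).
rewrite /c hzw hyi (hw b) subrr mulr0.
move=> h; have : s * (dot (w a) (w b) + kap^-1) = 0 by rewrite -h; ring.
move/eqP; rewrite mulf_eq0 (gt_eqF s0) /= addr_eq0 => /eqP.
by [].
Qed.

Lemma boundE_aux (R : realType) (K s a1 a2 b1 b2 : R) : 1 <= K ->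
  ln (expR (s * (a2 - a1 + b2 - b1)) + K * expR (- (s * (K^-1 + a1 + b1)))) =
  ln (expR (s * (a2 + b2)) + K * expR (- (s * K^-1))) - s * (a1 + b1).
Proof.
move=> kap1.
have -> : expR (s * (a2 - a1 + b2 - b1)) + K * expR (- (s * (K^-1 + a1 + b1)))
    = (expR (s * (a2 + b2)) + K * expR (- (s * K^-1))) * expR (- (s * (a1 + b1))).
  rewrite mulrDl -mulrA -!expRD; congr (expR _ + _ * expR _); ring.
rewrite lnM ?posrE ?expR_gt0 // ?expRK //.
by apply: addr_gt0; rewrite ?expR_gt0 //; apply: mulr_gt0; rewrite ?expR_gt0 //; lra.
Qed.

Lemma boundE (R : realType) (k : nat) (s a1 a2 b1 b2 : R) :
  (2 <= k)%N ->
  gm_bound k s a1 a2 b1 b2 =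
  ln (expR (s * (a2 + b2)) + (k%:R - 1) * expR (- (s * (k%:R - 1)^-1)))
  - s * (a1 + b1).
Proof.
move=> k2.
have kap1 : 1 <= (k%:R : R) - 1.
  rewrite lerBrDr -(natrD R 1 1) ler_nat; exact: k2.
by rewrite /gm_bound boundE_aux.
Qed.

Lemma part1b (R : realType) (d k N : nat) (y : 'I_N -> 'I_k)
  (s a1 a2 b1 b2 : R) :
  (2 <= k)%N -> balanced y ->
  forall (w : 'I_k -> 'rV[R]_d) (z : 'I_N -> 'rV[R]_d),
     (forall j, on_sphere (w j)) ->
     (forall i j : 'I_k, i != j -> dot (w i) (w j) = - (k%:R - 1)^-1) ->
     (forall i : 'I_N, z i = w (y i)) ->
     gm_loss y s a1 a2 b1 b2 w z = gm_bound k s a1 a2 b1 b2.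
Proof.
move=> k2 hb w z hw hd hzw.
have hN : (0 < N)%N by case: hb.
have N0 : 0 < (N%:R : R) by rewrite ltr0n.
rewrite boundE //.
set B := _ - _.
have Hi : forall i : 'I_N,
  - ln (expR (s * (a1 * dot (w (y i)) (z i) + b1)) /
          (expR (s * (a2 * dot (w (y i)) (z i) + b2)) +
           \sum_(j < k | j != y i) expR (s * dot (w j) (z i)))) = B.
  move=> i; rewrite hzw (hw (y i)) !mulr1.
  have -> : \sum_(j < k | j != y i) expR (s * dot (w j) (w (y i)))
      = (k%:R - 1) * expR (- (s * (k%:R - 1)^-1)).
    rewrite (eq_bigr (fun j => 1 * expR (- (s * (k%:R - 1)^-1)))); last first.
      by move=> j hj; rewrite hd // mul1r mulrN.
    by rewrite -mulr_suml sum_neq1.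
  have kap1 : 1 <= (k%:R : R) - 1.
    rewrite lerBrDr -(natrD R 1 1) ler_nat; exact: k2.
  rewrite lnM ?posrE ?expR_gt0 ?invr_gt0 //; last first.
    by apply: addr_gt0; rewrite ?expR_gt0 //; apply: mulr_gt0; rewrite ?expR_gt0 //; lra.
  rewrite lnV ?posrE; last first.
    by apply: addr_gt0; rewrite ?expR_gt0 //; apply: mulr_gt0; rewrite ?expR_gt0 //; lra.
  rewrite expRK /B; ring.
rewrite /gm_loss (eq_bigr _ (fun i _ => Hi i)) sumr_const card_ord.
by rewrite -[B *+ N]mulr_natl mulrA mulVf ?mul1r // lt0r_neq0.
Qed.

Lemma sum_trunc (R : realType) (G : nat -> R) (m d : nat) : (m <= d)%N ->
  \sum_(i < d) (G i * ((i : nat) < m)%:R) = \sum_(i < m) G i.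
Proof.
move=> hmd.
rewrite -(big_mkord xpredT (fun i => G i * (i < m)%:R)).
rewrite -(big_mkord xpredT G).
rewrite (big_cat_nat (leq0n m) hmd) /=.
rewrite [X in _ + X]big_nat_cond [X in _ + X]big1 ?addr0; last first.
  by move=> i /andP [/andP [hi _] _]; rewrite ltnNge hi mulr0.
rewrite big_nat_cond [RHS]big_nat_cond; apply: eq_bigr => i /andP [/andP [_ hi] _].
by rewrite hi mulr1.
Qed.

Lemma sum_delta (R : realType) (m a : nat) (F : nat -> R) : (a < m)%N ->
  \sum_(i < m) (((i : nat) == a)%:R * F i) = F a.
Proof.
move=> ha; rewrite (bigD1 (Ordinal ha)) //= eqxx mul1r big1 ?addr0 //.
move=> i hi; suff -> : ((i : nat) == a) = false by rewrite mul0r.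
apply/negbTE; apply: contra hi => /eqP h; apply/eqP; exact: val_inj.
Qed.

Lemma simplex_alg (R : realType) (mr A sg : R) : 0 < mr ->
  A ^+ 2 = (mr + 1) / mr -> sg ^+ 2 = mr^-1 ->
  [/\ A * (A * 1 + (sg - A) / mr) + (sg - A) / mr * A + mr * ((sg - A) / mr * ((sg - A) / mr)) = 1,
      A * (A * 0 + (sg - A) / mr) + (sg - A) / mr * A + mr * ((sg - A) / mr * ((sg - A) / mr)) = - mr^-1,
      A * (- sg) + mr * ((sg - A) / mr * (- sg)) = - mr^-1
    & mr * ((- sg) * (- sg)) = 1].
Proof.
move=> m0 hA hs.
have mn : mr != 0 by apply: lt0r_neq0.
split.
- have -> : A * (A * 1 + (sg - A) / mr) + (sg - A) / mr * A + mr * ((sg - A) / mr * ((sg - A) / mr))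
    = A ^+ 2 + (sg ^+ 2 - A ^+ 2) / mr by field.
  by rewrite hA hs; field.
- have -> : A * (A * 0 + (sg - A) / mr) + (sg - A) / mr * A + mr * ((sg - A) / mr * ((sg - A) / mr))
    = (sg ^+ 2 - A ^+ 2) / mr by field.
  by rewrite hA hs; field.
- have -> : A * (- sg) + mr * ((sg - A) / mr * (- sg)) = - sg ^+ 2 by field.
  by rewrite hs.
- have -> : mr * ((- sg) * (- sg)) = mr * sg ^+ 2 by ring.
  by rewrite hs mulfV.
Qed.

Lemma simplex (R : realType) (d k : nat) : (2 <= k)%N -> (k <= d.+1)%N ->
  exists w : 'I_k -> 'rV[R]_d, (forall j, on_sphere (w j)) /\
    (forall a b : 'I_k, a != b -> dot (w a) (w b) = - (k%:R - 1)^-1).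
Proof.
move=> k2 kd.
have hk : k = k.-1.+1 by rewrite prednK // (leq_trans _ k2).
move: (k.-1) hk => m hk.
have hm1 : (1 <= m)%N by rewrite -ltnS -hk.
have hmd : (m <= d)%N by rewrite -ltnS -hk.
pose mr := (m%:R : R).
have m0 : 0 < mr by rewrite /mr ltr0n.
have hkm : (k%:R : R) - 1 = mr by rewrite hk -natr1 addrK.
rewrite hkm.
pose sg := (Num.sqrt mr)^-1.
pose A := Num.sqrt ((mr + 1) / mr).
have hA : A ^+ 2 = (mr + 1) / mr.
  rewrite /A sqr_sqrtr //; apply: divr_ge0; lra.
have hs : sg ^+ 2 = mr^-1 by rewrite /sg exprVn sqr_sqrtr // ltW.
have [c1 c2 c3 c4] := simplex_alg m0 hA hs.
move: c1 c2 c3 c4.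
move: (sg - A) => Bn.
move: (- sg) => T.
move=> c1 c2 c3 c4.
pose fv := fun (j i : nat) => if (j < m)%N then A * (i == j)%:R + Bn / mr else T.
pose w := fun j : 'I_k => \row_(i < d) (fv j i * ((i : nat) < m)%:R) : 'rV[R]_d.
have Hd : forall a b : 'I_k, dot (w a) (w b) = \sum_(i < m) fv a i * fv b i.
  move=> a b; rewrite /dot -(@sum_trunc R (fun i => fv a i * fv b i) m d hmd); apply: eq_bigr => i _.
  rewrite !mxE; case: ((i : nat) < m)%N; rewrite ?mulr1 ?mulr0 ?mul0r //.
have sumC : forall C : R, \sum_(i < m) C = mr * C.
  by move=> C; rewrite sumr_const card_ord mulr_natl.
have F1 : forall a b : 'I_k, (a < m)%N -> (b < m)%N ->
    dot (w a) (w b) = A * (A * ((a : nat) == b)%:R + Bn / mr) + Bn / mr * A + mr * (Bn / mr * (Bn / mr)).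
  move=> a b ha hb; rewrite Hd /fv ha hb.
  rewrite (eq_bigr (fun i : 'I_m => ((i : nat) == a)%:R * (A * (A * ((i : nat) == b)%:R + Bn / mr))
                   + (((i : nat) == b)%:R * (Bn / mr * A) + Bn / mr * (Bn / mr)))); last first.
    by move=> i _; ring.
  rewrite big_split big_split /= (@sum_delta R m a (fun i => A * (A * (i == b)%:R + Bn / mr))) //.
  rewrite (@sum_delta R m b (fun _ => Bn / mr * A)) // sumC.
  by rewrite addrA.
have F2 : forall a b : 'I_k, (a < m)%N -> ~~ (b < m)%N ->
    dot (w a) (w b) = A * T + mr * (Bn / mr * T).
  move=> a b ha hb; rewrite Hd /fv ha (negbTE hb).
  rewrite (eq_bigr (fun i : 'I_m => ((i : nat) == a)%:R * (A * T) + Bn / mr * T)); last first.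
    by move=> i _; ring.
  by rewrite big_split /= (@sum_delta R m a (fun _ => A * T)) // sumC.
have F3 : forall a b : 'I_k, ~~ (a < m)%N -> ~~ (b < m)%N ->
    dot (w a) (w b) = mr * (T * T).
  by move=> a b ha hb; rewrite Hd /fv (negbTE ha) (negbTE hb) sumC.
have ge_eq : forall a b : 'I_k, ~~ (a < m)%N -> ~~ (b < m)%N -> a = b.
  move=> a b ha hb; apply: val_inj.
  move: (ltn_ord a) (ltn_ord b) ha hb => /=.
  move: (nat_of_ord a) (nat_of_ord b) => x y; clear -hk; lia.
exists w; split.
  move=> j; rewrite /on_sphere.
  case hj: ((j : nat) < m)%N.
    by rewrite F1 // eqxx.
  by rewrite F3 ?hj.
move=> a b hab.
case ha: ((a : nat) < m)%N; case hb: ((b : nat) < m)%N.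
- rewrite F1 //; suff -> : ((a : nat) == b) = false by [].
  by apply/negbTE; apply: contra hab => /eqP h; apply/eqP; apply: val_inj.
- by rewrite F2 ?hb.
- by rewrite dotC F2 ?ha.
- by move: hab; rewrite (ge_eq a b) ?ha ?hb // eqxx.
Qed.

Lemma bigmax_const (R : realType) (I : finType) (P : pred I) (F : I -> R) (c x0 : R) :
  x0 <= c -> (exists i, P i) -> (forall i, P i -> F i = c) ->
  \big[Num.max/x0]_(i | P i) F i = c.
Proof.
move=> hx [i0 hi0] hF.
rewrite (eq_bigr (fun _ => c)) // (bigD1 i0) //=.
have H : \big[Num.max/x0]_(i | P i && (i != i0)) c <= c.
  by elim/big_ind: _ => // x y hx' hy'; rewrite ge_max hx' hy'.
by rewrite max_l.
Qed.

Lemma bigmin_const (R : realType) (I : finType) (P : pred I) (F : I -> R) (c x0 : R) :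
  c <= x0 -> (exists i, P i) -> (forall i, P i -> F i = c) ->
  \big[Num.min/x0]_(i | P i) F i = c.
Proof.
move=> hx [i0 hi0] hF.
rewrite (eq_bigr (fun _ => c)) // (bigD1 i0) //=.
have H : c <= \big[Num.min/x0]_(i | P i && (i != i0)) c.
  by elim/big_ind: _ => // x y hx' hy'; rewrite le_min hx' hy'.
by rewrite min_l.
Qed.

Lemma margins (R : realType) (d k N : nat) (y : 'I_N -> 'I_k)
  (w : 'I_k -> 'rV[R]_d) (z : 'I_N -> 'rV[R]_d) :
  (2 <= k)%N -> (0 < N)%N ->
  (forall j, on_sphere (w j)) ->
  (forall i j : 'I_k, i != j -> dot (w i) (w j) = - (k%:R - 1)^-1) ->
  (forall i : 'I_N, z i = w (y i)) ->
  class_margin w = acos (- (k%:R - 1)^-1) /\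
  min_sample_margin y w z = k%:R / (k%:R - 1).
Proof.
move=> k2 hN hw hd hzw.
have kap1 : 1 <= (k%:R : R) - 1.
  rewrite lerBrDr -(natrD R 1 1) ler_nat; exact: k2.
have kinv : (k%:R - 1 : R)^-1 <= 1 by rewrite invf_le1 // (lt_le_trans _ kap1).
have k0 : (0 < k)%N by apply: leq_trans k2.
pose o0 := Ordinal k0. pose o1 := Ordinal k2.
have o01 : o0 != o1 by [].
split.
  rewrite /class_margin; congr acos.
  apply: bigmax_const.
  - lra.
  - by exists (o0, o1).
  - by case=> a b /= hab; apply: hd.
rewrite /min_sample_margin.
apply: bigmin_const.
- have -> : (k%:R : R) / (k%:R - 1) = 1 + (k%:R - 1)^-1.
    by field; apply: lt0r_neq0; lra.
  lra.
- by exists (Ordinal hN).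
- move=> i _.
  rewrite hzw (hw (y i)).
  rewrite (@bigmax_const R _ _ _ (- (k%:R - 1)^-1)).
  + by field; apply: lt0r_neq0; lra.
  + lra.
  + case: (eqVneq o0 (y i)) => h.
      by exists o1; rewrite -h eq_sym.
    by exists o0.
  + by move=> j hj; apply: hd.
Qed.

Unset Implicit Arguments.
Unset Strict Implicit.

Theorem theorem3 (R : realType) (d k N : nat) (y : 'I_N -> 'I_k)
  (s a1 a2 b1 b2 : R) :
  (2 <= d)%N -> (2 <= k)%N -> (k <= d.+1)%N -> balanced y ->
  0 < s -> 2^-1 <= a1 -> a2 <= a1 ->
  (forall (w : 'I_k -> 'rV[R]_d) (z : 'I_N -> 'rV[R]_d),
     (forall j, on_sphere (w j)) -> (forall i, on_sphere (z i)) ->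
     gm_bound k s a1 a2 b1 b2 <= gm_loss y s a1 a2 b1 b2 w z /\
     (gm_loss y s a1 a2 b1 b2 w z = gm_bound k s a1 a2 b1 b2 <->
        (forall i j : 'I_k, i != j -> dot (w i) (w j) = - (k%:R - 1)^-1) /\
        (forall i : 'I_N, z i = w (y i)))) /\
  (forall (w : 'I_k -> 'rV[R]_d) (z : 'I_N -> 'rV[R]_d),
     (forall j, on_sphere (w j)) -> (forall i, on_sphere (z i)) ->
     (forall (w' : 'I_k -> 'rV[R]_d) (z' : 'I_N -> 'rV[R]_d),
        (forall j, on_sphere (w' j)) -> (forall i, on_sphere (z' i)) ->
        gm_loss y s a1 a2 b1 b2 w z <= gm_loss y s a1 a2 b1 b2 w' z') ->
     class_margin w = acos (- (k%:R - 1)^-1) /\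
     min_sample_margin y w z = k%:R / (k%:R - 1)).
Proof.
move=> d2 k2 kd hb s0 ha1 ha2.
have hN : (0 < N)%N by case: hb.
split.
  move=> w z hw hz.
  have [h1 h2] := @part1 R d k N y s a1 a2 b1 b2 k2 hb s0 ha1 ha2 w z hw hz.
  split => //; split => //.
  by move=> [hd hzw]; apply: (@part1b R d k N y s a1 a2 b1 b2 k2 hb w z hw hd hzw).
move=> w z hw hz hmin.
have [w' [hw' hd']] := @simplex R d k k2 kd.
pose z' := fun i => w' (y i).
have hz' : forall i, on_sphere (z' i) by move=> i; exact: hw'.
have E' := @part1b R d k N y s a1 a2 b1 b2 k2 hb w' z' hw' hd' (fun i => erefl).
have := hmin w' z' hw' hz'; rewrite E' => hle.
have [hge heq] := @part1 R d k N y s a1 a2 b1 b2 k2 hb s0 ha1 ha2 w z hw hz.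
have [hd hzw] : (forall i j : 'I_k, i != j -> dot (w i) (w j) = - (k%:R - 1)^-1) /\
        (forall i : 'I_N, z i = w (y i)).
  by apply: heq; apply/eqP; rewrite eq_le hle hge.
exact: (@margins R d k N y w z k2 hN hw hd hzw).
Qed.
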